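(* Let $G$ and $\ell$ be as in the construction described in the context. If $G$ has an acyclic matching of size at least $\ell$, then for some $q\in[t]$ the instance $(X,\mathcal{S}_q)$ of \textsc{Exact-3-Cover} is a Yes-instance.
   Context: Construction. Let $n=3c$ with $c\in\mathbb{N}$, $X=[n]$, and let $(X,\mathcal{S}_1),\dots,(X,\mathcal{S}_t)$ be instances of \textsc{Exact-3-Cover} (each $\mathcal{S}_i$ a collection of 3-element subsets of $X$, all $\mathcal{S}_i$ of the same size $m$ and pairwise distinct as collections). An instance $(X,\mathcal{S})$ is a Yes-instance if some subcollection of $\mathcal{S}$ covers every element of $X$ exactly once. Let $\mathcal{C}=\bigcup_{i\in[t]}\mathcal{S}_i=\{s_1,\dots,s_{|\mathcal{C}|}\}$ (distinct 3-sets). The graph $G$: a vertex set $X'=\{v_a:a\in X\}$; for each $s_j=\{a,b,c\}\in\mathcal{C}$ a set gadget $Q_j$ with vertices $u_{ja},u_{jb},u_{jc}$ (interface vertices), $u_j,w_j,u_j',w_j'$, where each of $u_j,w_j$ is adjacent to each of $u_{ja},u_{jb},u_{jc}$, and additionally $u_jw_j,u_ju_j',w_jw_j'$ are edges; for each $s_j\in\mathcal{C}$ and $d\in s_j$ the edge $u_{jd}v_d$ (cross edges); a vertex $p$ and vertices $P=\{p_1,\dots,p_t\}$ with edges $pp_i$ for all $i$; and for each $i\in[t]$ and each $s_j\in\mathcal{C}\setminus\mathcal{S}_i$, edges from $p_i$ to the three interface vertices of $Q_j$. There are no other edges. Set $\ell=2|\mathcal{C}|+\frac{2n}{3}+1$.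 A matching $M$ is acyclic if the subgraph induced by the endpoints of its edges is a forest. *)

(* Defs.v *)
From HB Require Import structures.
From mathcomp Require Import all_boot.

Set Implicit Arguments.
Unset Strict Implicit.
Unset Printing Implicit Defensive.

Definition is_matching (T : finType) (adj : rel T) (M : {set {set T}}) : Prop :=
  (forall e, e \in M -> exists x y, adj x y /\ e = [set x; y]) /\
  (forall e1 e2, e1 \in M -> e2 \in M -> e1 != e2 -> [disjoint e1 & e2]).

Definition induced_forest (T : finType) (adj : rel T) (A : {set T}) : Prop :=
  ~ exists p : seq T, [/\ 2 < size p, uniq p, all (mem A) p & cycle adj p].

Definition acyclic_matching (T : finType) (adj : rel T) (M : {set {set T}}) : Prop :=
  is_matching adj M /\ induced_forest adj (cover M).

(* Exact-3-Cover.  X = 'I_n (standing for [n]); an instance is a       *)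

Definition three_sets (n : nat) (S : {set {set 'I_n}}) : Prop :=
  forall s, s \in S -> #|s| = 3.

Definition x3c_yes (n : nat) (S : {set {set 'I_n}}) : Prop :=
  exists S' : {set {set 'I_n}}, S' \subset S /\
    forall a : 'I_n, #|[set s in S' | a \in s]| = 1.

Definition bigC (n t : nat) (S : 'I_t -> {set {set 'I_n}}) : {set {set 'I_n}} :=
  \bigcup_(i < t) S i.

(* index set of the gadgets: the sets s_j of C *)
Definition csub (n : nat) (C : {set {set 'I_n}}) := {s : {set 'I_n} | s \in C}.
(* index set of the interface vertices u_{jd}: pairs (s_j, d) with d in s_j *)
Definition iface (n : nat) (C : {set {set 'I_n}}) :=
  {p : csub C * 'I_n | p.2 \in val p.1}.

Inductive vert (n t : nat) (C : {set {set 'I_n}}) : Type :=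
| VX  of 'I_n
| VI  of iface C
| VU  of csub C
| VW  of csub C
| VU' of csub C
| VW' of csub C
| VP
| VPi of 'I_t.

Section VertFin.
Variables (n t : nat) (C : {set {set 'I_n}}).

Definition vcode (v : vert t C) :
    ('I_n + iface C) + (csub C * 'I_4) + option 'I_t :=
  match v with
  | VX a => inl (inl (inl a))
  | VI x => inl (inl (inr x))
  | VU s => inl (inr (s, inord 0))
  | VW s => inl (inr (s, inord 1))
  | VU' s => inl (inr (s, inord 2))
  | VW' s => inl (inr (s, inord 3))
  | VP => inr None
  | VPi i => inr (Some i)
  end.

Definition vdecode (x : ('I_n + iface C) + (csub C * 'I_4) + option 'I_t)
    : vert t C :=
  match x with
  | inl (inl (inl a)) => @VX n t C a
  | inl (inl (inr x)) => @VI n t C x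
  | inl (inr (s, k)) =>
      match val k with 0 => @VU n t C s | 1 => @VW n t C s | 2 => @VU' n t C s | _ => @VW' n t C s end
  | inr None => @VP n t C
  | inr (Some i) => @VPi n t C i
  end.

Lemma vcodeK : cancel vcode vdecode.
Proof. by case=> //= s; rewrite inordK. Qed.

HB.instance Definition _ := Finite.copy (vert t C) (can_type vcodeK).
End VertFin.

(* The (directed, one orientation per edge) edge list of G. *)
Definition G_edge0 (n t : nat) (S : 'I_t -> {set {set 'I_n}})
    (x y : vert t (bigC S)) : bool :=
  match x, y with
  | VU s, VI z => (val z).1 == s
  | VW s, VI z => (val z).1 == s
  | VU s, VW s' => s == s'
  | VU s, VU' s' => s == s'
  | VW s, VW' s' => s == s'
  | VI z, VX a => (val z).2 == a
  | VP, VPi _ => true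
  | VPi i, VI z => val (val z).1 \notin S i
  | _, _ => false
  end.

Definition G_adj (n t : nat) (S : 'I_t -> {set {set 'I_n}}) : rel (vert t (bigC S)) :=
  fun x y => G_edge0 x y || G_edge0 y x.

(* ell = 2|C| + 2n/3 + 1, with n = 3c *)
Definition ell (c t : nat) (S : 'I_t -> {set {set 'I_(3 * c)}}) : nat :=
  2 * #|bigC S| + 2 * c + 1.

Arguments G_adj {n t} S.
Arguments ell {c t} S.
Arguments bigC {n t} S.

(* Main.v *)
Require Import Defs.
From HB Require Import structures.
From mathcomp Require Import all_boot.
From mathcomp Require Import zify.
Set Implicit Arguments. Unset Strict Implicit. Unset Printing Implicit Defensive.

Arguments VX {n t C} _.
Arguments VI {n t C} _.
Arguments VU {n t C} _.
Arguments VW {n t C} _.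
Arguments VU' {n t C} _.
Arguments VW' {n t C} _.
Arguments VP {n t C}.
Arguments VPi {n t C} _.

Ltac dneq := apply/eqP; let H := fresh in move=> H; discriminate H.
Ltac uniqtac := rewrite /= !inE ?negb_or ?andbT; repeat (apply/andP; split); apply/eqP; let HH := fresh in move=> HH; try discriminate HH.

Section P.
Variables (c t : nat) (S : 'I_t -> {set {set 'I_(3 * c)}}).
Local Notation C := (bigC S).
Local Notation V := (vert t C).
Local Notation adj := (G_adj S).

Definition blk (v : V) : option (csub C) :=
  match v with VI z => Some (val z).1 | VU s | VW s | VU' s | VW' s => Some s | _ => None end.
Definition isX (v : V) := if v is VX _ then true else false.
Definition isPi (v : V) := if v is VPi _ then true else false.
Definition isP (v : V) := if v is VP then true else false.
Definition isI j (v : V) := if v is VI z then (val z).1 == j else false.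
Definition isU j (v : V) := if v is VU s then s == j else false.
Definition isW j (v : V) := if v is VW s then s == j else false.

Lemma exists_in2 (P : pred V) x y : [exists v in [set x; y], P v] = P x || P y.
Proof.
apply/existsP/orP => [[v /andP[]]|[]].
- by rewrite !inE => /orP[]/eqP-> ->; [left|right].
- by move=> Hx; exists x; rewrite !inE eqxx Hx.
- by move=> Hy; exists y; rewrite !inE eqxx orbT Hy.
Qed.

Lemma shape x y : adj x y ->
  [\/ (exists j, [/\ blk x = Some j, blk y = Some j & [|| isU j x, isU j y, isW j x | isW j y]]),
      (exists z : iface C, [set x; y] = [set VI z; VX (val z).2]),
      (exists i z, [set x; y] = [set VPi i; VI z] /\ val (val z).1 \notin S i)
    | (exists i, [set x; y] = [set VP; VPi i])].
Proof.
rewrite /G_adj.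
case: x => [a|z|s|s|s|s||i]; case: y => [a'|z'|s'|s'|s'|s'||i'] //=;
 rewrite ?orbF ?orFb.
all: try (move=> /eqP E; subst).
all: try (by apply: Or41; eexists; split; [reflexivity|reflexivity|rewrite ?eqxx ?orbT]).
all: try (by apply: Or42; eexists; (reflexivity || apply: setUC)).
all: try (by apply: Or44; eexists; (reflexivity || apply: setUC)).
all: by apply: Or43; do 2 eexists; split; [(reflexivity || apply: setUC)| move/eqP: E].
Qed.

Variable M : {set {set V}}.
Hypothesis Mmatch : is_matching adj M.
Hypothesis Mforest : induced_forest adj (cover M).
Local Notation cov := (cover M).
Hypothesis S3 : forall i, three_sets (S i).

Lemma medge e : e \in M -> exists x y, adj x y /\ e = [set x; y].
Proof. by case: Mmatch => H _ /H. Qed.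

Lemma mdisj e1 e2 v : e1 \in M -> e2 \in M -> v \in e1 -> v \in e2 -> e1 = e2.
Proof.
move=> H1 H2 v1 v2; apply/eqP; apply/negPn/negP => ne.
case: Mmatch => _ /(_ _ _ H1 H2 ne) /disjointFr /(_ v1).
by rewrite v2.
Qed.

Lemma mem_cov e v : e \in M -> v \in e -> v \in cov.
Proof. by move=> He Hv; apply/bigcupP; exists e. Qed.

Lemma covP v : v \in cov -> exists2 e, e \in M & v \in e.
Proof. by move/bigcupP. Qed.

Lemma card_meet (F : {set {set V}}) (A : {set V}) :
  F \subset M -> (forall e, e \in F -> exists2 v, v \in e & v \in A) ->
  #|F| <= #|A :&: cover F|.
Proof.
move=> FM HF.
pose f (e : {set V}) := odflt VP [pick v in e :&: A].
have fP e : e \in F -> f e \in e :&: A.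
  move=> eF; rewrite /f; case: pickP => [v //|/=].
  by case: (HF e eF) => v v1 v2 /(_ v); rewrite inE v1 v2.
rewrite -(card_in_imset (f := f)).
  apply: subset_leq_card; apply/subsetP => v /imsetP[e eF ->].
  have := fP e eF; rewrite !inE => /andP[H1 H2]; rewrite H2 /=.
  by apply/bigcupP; exists e.
move=> e1 e2 H1 H2 E.
have := fP e1 H1; have := fP e2 H2; rewrite !inE E => /andP[a _] /andP[b _].
by apply: (mdisj (subsetP FM _ H1) (subsetP FM _ H2) b a).
Qed.

Lemma acyc (p : seq V) : 2 < size p -> uniq p -> all (mem cov) p -> cycle adj p -> False.
Proof. by move=> *; apply: Mforest; exists p. Qed.


Lemma eshape e : e \in M ->
  [\/ (exists x y j, [/\ e = [set x; y], blk x = Some j, blk y = Some j & [|| isU j x, isU j y, isW j x | isW j y]]),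
      (exists z : iface C, e = [set VI z; VX (val z).2]),
      (exists i z, e = [set VPi i; VI z] /\ val (val z).1 \notin S i)
    | (exists i, e = [set VP; VPi i])].
Proof.
case/medge => x [y [a ->]].
case: (shape a) => [[j [*]]|[z ->]|[i [z [-> H]]]|[i ->]].
- by apply: Or41; exists x, y, j.
- by apply: Or42; exists z.
- by apply: Or43; exists i, z.
- by apply: Or44; exists i.
Qed.

Definition Mj j := [set e in M | [exists v in e, blk v == Some j]].
Definition Eu j := [set e in M | [exists v in e, isU j v]].
Definition Ew j := [set e in M | [exists v in e, isW j v]].
Definition Cr j := [set e in M | [exists v in e, isX v] && [exists v in e, isI j v]].
Definition Pe j := [set e in M | [exists v in e, isPi v] && [exists v in e, isI j v]].
Definition Iset j := [set v in cov | isI j v].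
Definition Pset := [set e in M | [exists v in e, isP v]].
Definition CrAll := [set e in M | [exists v in e, isX v]].

Lemma blkE j v : blk v = Some j -> [/\ isX v = false, isPi v = false & isP v = false].
Proof. by case: v. Qed.


Lemma F1 j : Mj j \subset Eu j :|: Ew j :|: (Cr j :|: Pe j).
Proof.
apply/subsetP => e; rewrite !inE => /andP[eM]; rewrite eM /=.
case: (eshape eM) => [[x [y [j' [-> bx bY hu]]]] | [z ->] | [i [z [-> Hn]]] | [i ->]];
  rewrite !exists_in2 /=.
- by rewrite bx bY orbb => /eqP[<-]; case/or4P: hu => ->; rewrite ?orbT.
- by case/orP=> /eqP // [<-]; rewrite eqxx.
- by move/eqP=> [<-].
- by move/eqP.
Qed.


Lemma tri x y z : x \in cov -> y \in cov -> z \in cov -> x != y -> x != z -> y != z ->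
  adj x y -> adj y z -> adj z x -> False.
Proof.
move=> hx hy hz n1 n2 n3 a1 a2 a3; apply: (@acyc [:: x; y; z]) => //.
- by rewrite /= !inE !negb_or n1 n2 n3.
- by rewrite /= hx hy hz.
- by rewrite /= a1 a2 a3.
Qed.

Lemma quad x y z w : x \in cov -> y \in cov -> z \in cov -> w \in cov ->
  x != y -> x != z -> x != w -> y != z -> y != w -> z != w ->
  adj x y -> adj y z -> adj z w -> adj w x -> False.
Proof.
move=> hx hy hz hw n1 n2 n3 n4 n5 n6 a1 a2 a3 a4; apply: (@acyc [:: x; y; z; w]) => //.
- by rewrite /= !inE !negb_or n1 n2 n3 n4 n5 n6.
- by rewrite /= hx hy hz hw.
- by rewrite /= a1 a2 a3 a4.
Qed.

Lemma adjC x y : adj x y = adj y x.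
Proof. by rewrite /G_adj orbC. Qed.

Lemma C1 j : VU j \in cov -> VW j \in cov -> 0 < #|Iset j| -> False.
Proof.
move=> hu hw /card_gt0P[v]; rewrite inE => /andP[hv]; case: v hv => // z hz /eqP zj.
by apply: (tri hu hw hz); try dneq; rewrite /G_adj /= ?zj ?eqxx ?orbT.
Qed.

Lemma quadI j x y : x \in cov -> y \in cov -> x != y -> isI j x = false -> isI j y = false ->
  (forall z : iface C, (val z).1 = j -> adj x (VI z) && adj y (VI z)) -> 1 < #|Iset j| -> False.
Proof.
move=> hx hy xy ix iy ha /card_gt1P[v1 [v2 [H1 H2 ne]]].
move: H1 H2; rewrite !inE => /andP[h1 i1] /andP[h2 i2].
case: v1 ne h1 i1 => // z1 ne h1 /eqP e1.
case: v2 ne h2 i2 => // z2 ne h2 /eqP e2.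
case/andP: (ha z1 e1) => a1 b1; case/andP: (ha z2 e2) => a2 b2.
have b1' : adj (VI z1) y by rewrite adjC.
have a2' : adj (VI z2) x by rewrite adjC.
apply: (quad hx h1 hy h2 _ _ _ _ _ _ a1 b1' b2 a2') => //; apply/eqP => E.
- by move: ix; rewrite E /= e1 eqxx.
- by move: ix; rewrite E /= e2 eqxx.
- by move: iy; rewrite -E /= e1 eqxx.
- by move: iy; rewrite E /= e2 eqxx.
Qed.

Lemma C2 j i : VPi i \in cov -> val j \notin S i -> (VU j \in cov) || (VW j \in cov) ->
  1 < #|Iset j| -> False.
Proof.
move=> hp hn /orP[] h.
- apply: (quadI hp h) => // z zj; by rewrite /G_adj /= zj hn eqxx ?orbT.
- apply: (quadI hp h) => // z zj; by rewrite /G_adj /= zj hn eqxx ?orbT.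
Qed.

Lemma C3 j i1 i2 : i1 != i2 -> VPi i1 \in cov -> VPi i2 \in cov -> val j \notin S i1 ->
  val j \notin S i2 -> 1 < #|Iset j| -> False.
Proof.
move=> ne h1 h2 n1 n2; apply: (quadI h1 h2) => //.
by move=> z zj; rewrite /G_adj /= zj n1 n2.
Qed.

Lemma Pe_info j e : e \in Pe j -> exists i, VPi i \in e /\ val j \notin S i.
Proof.
rewrite inE => /andP[eM]; case: (eshape eM) => [[x [y [j' [-> bx bY hu]]]] | [z ->] | [i [z [-> Hn]]] | [i ->]];
  rewrite !exists_in2 /=.
- by case/blkE: bx => _ -> _; case/blkE: bY => _ -> _.
- by [].
- move=> /eqP zj; exists i; split; first by rewrite !inE eqxx.
  by rewrite -zj.
- by rewrite ?andbF.
Qed.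

Lemma cover_sub (F : {set {set V}}) : F \subset M -> cover F \subset cov.
Proof.
move=> FM; apply/subsetP => v /bigcupP[e eF ve]; apply/bigcupP; exists e => //.
exact: (subsetP FM).
Qed.

Lemma card_pt (A : {set V}) x : (forall v, v \in A -> v = x) -> #|A| <= (x \in A).
Proof.
move=> H; case: (boolP (x \in A)) => hx.
  apply: (@leq_trans #|[set x]|); last by rewrite cards1.
  by apply: subset_leq_card; apply/subsetP => v /H ->; rewrite inE.
rewrite leqn0 cards_eq0; apply/eqP/setP => v; rewrite inE.
by apply/negP => /[dup] /H ->; rewrite (negbTE hx).
Qed.

Lemma EuU j : #|Eu j| <= (VU j \in cov).
Proof.
have FM : Eu j \subset M by apply/subsetP => e; rewrite inE => /andP[].
apply: leq_trans (card_meet (A := [set v | isU j v]) FM _) _.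
  by move=> e; rewrite inE => /andP[_ /existsP[v /andP[h1 h2]]]; exists v; rewrite ?inE.
set A := _ :&: _.
apply: leq_trans (card_pt (A := A) (x := VU j) _) _.
  by move=> v; rewrite !inE => /andP[]; case: v => // s /eqP ->.
case: (boolP (VU j \in A)) => // hA; rewrite lt0b.
by move: hA; rewrite inE => /andP[_ /(subsetP (cover_sub FM))].
Qed.

Lemma EwW j : #|Ew j| <= (VW j \in cov).
Proof.
have FM : Ew j \subset M by apply/subsetP => e; rewrite inE => /andP[].
apply: leq_trans (card_meet (A := [set v | isW j v]) FM _) _.
  by move=> e; rewrite inE => /andP[_ /existsP[v /andP[h1 h2]]]; exists v; rewrite ?inE.
set A := _ :&: _.
apply: leq_trans (card_pt (A := A) (x := VW j) _) _.
  by move=> v; rewrite !inE => /andP[]; case: v => // s /eqP ->.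
case: (boolP (VW j \in A)) => // hA; rewrite lt0b.
by move: hA; rewrite inE => /andP[_ /(subsetP (cover_sub FM))].
Qed.

Lemma CrPe_I j : #|Cr j :|: Pe j| <= #|Iset j|.
Proof.
have FM : Cr j :|: Pe j \subset M.
  by apply/subsetP => e; rewrite !inE => /orP[]/andP[].
apply: leq_trans (card_meet (A := [set v | isI j v]) FM _) _.
  move=> e; rewrite !inE => /orP[]/andP[_ /andP[_ /existsP[v /andP[h1 h2]]]]; exists v; by rewrite ?inE.
apply: subset_leq_card; apply/subsetP => v; rewrite !inE => /andP[-> /(subsetP (cover_sub FM)) ->].
by [].
Qed.

Lemma card_val (j : csub C) : #|val j| = 3.
Proof.
have := valP j; rewrite /bigC => /bigcupP[i _ hi]; exact: S3 hi.
Qed.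

Lemma Iset3 (j : csub C) : #|Iset j| <= 3.
Proof.
suff : #|Iset j| <= #|val j| by rewrite card_val.
have sub : Iset j \subset [set VI z | z in [set z : iface C | (val z).1 == j]].
  apply/subsetP => v; rewrite !inE => /andP[_]; case: v => // z zj.
  by apply/imsetP; exists z; rewrite ?inE.
apply: leq_trans (subset_leq_card sub) _.
rewrite card_imset; last by move=> a b [].
rewrite -(card_in_imset (f := fun z : iface C => (val z).2)).
  apply: subset_leq_card; apply/subsetP => d /imsetP[z]; rewrite inE => /eqP zj ->.
  by rewrite -zj; exact: (valP z).
move=> z1 z2; rewrite !inE => /eqP e1 /eqP e2 E; apply: val_inj.
by rewrite [val z1]surjective_pairing [val z2]surjective_pairing e1 e2 E.
Qed.

Lemma Pe_le1 j : #|Pe j| <= 1.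
Proof.
rewrite leqNgt; apply/negP => /[dup] H2 /card_gt1P[e1 [e2 [h1 h2 ne]]].
have [i1 [v1 n1]] := Pe_info h1; have [i2 [v2 n2]] := Pe_info h2.
have m1 : e1 \in M by move: h1; rewrite inE => /andP[].
have m2 : e2 \in M by move: h2; rewrite inE => /andP[].
have ni : i1 != i2.
  apply/eqP => E; subst i2; move/eqP: ne; apply; exact: (mdisj m1 m2 v1 v2).
apply: (C3 ni (mem_cov m1 v1) (mem_cov m2 v2) n1 n2).
apply: leq_trans H2 _; apply: leq_trans (CrPe_I j).
by apply: subset_leq_card; apply: subsetUr.
Qed.

Lemma gadget j : 3 * #|Mj j| + ((0 < #|Cr j|) && ~~((#|Cr j| == 3) && ((VU j \in cov) || (VW j \in cov))))
   <= 6 + 2 * #|Cr j|.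
Proof.
have f1 : #|Mj j| <= (VU j \in cov) + (VW j \in cov) + #|Cr j :|: Pe j|.
  apply: leq_trans (subset_leq_card (F1 j)) _.
  apply: leq_trans (leq_card_setU _ _) _; rewrite leq_add2r.
  apply: leq_trans (leq_card_setU _ _) _.
  by apply: leq_add; [exact: EuU | exact: EwW].
have f2 := CrPe_I j.
have f3 := Iset3 j.
have f4 : #|Cr j| <= #|Cr j :|: Pe j| by apply: subset_leq_card; apply: subsetUl.
have f5 : #|Pe j| <= #|Cr j :|: Pe j| by apply: subset_leq_card; apply: subsetUr.
have f6 : #|Cr j :|: Pe j| <= #|Cr j| + #|Pe j| by apply: leq_card_setU.
have f7 := Pe_le1 j.
have f8 : (VU j \in cov) && (VW j \in cov) -> #|Iset j| = 0.
  case/andP => hu hw; apply/eqP; rewrite eqn0Ngt; apply/negP; exact: C1 hu hw.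
have f9 : (VU j \in cov) || (VW j \in cov) -> 0 < #|Pe j| -> #|Iset j| <= 1.
  move=> huw /card_gt0P[e he]; have [i [vi ni]] := Pe_info he.
  have eM : e \in M by move: he; rewrite inE => /andP[].
  rewrite leqNgt; apply/negP; exact: C2 (mem_cov eM vi) ni huw.
have f10 : #|Pe j| = 0 -> #|Cr j :|: Pe j| <= #|Cr j|.
  by move/eqP; rewrite cards_eq0 => /eqP ->; rewrite setU0.
move: f1 f2 f3 f4 f5 f6 f7 f8 f9 f10.
case: (VU j \in cov); case: (VW j \in cov) => /=; lia.
Qed.

Lemma card_sumE (T : finType) (A : {set T}) : #|A| = \sum_(x : T) (x \in A : nat).
Proof. by rewrite -sum1_card big_mkcond /=; apply: eq_bigr => x _; case: (x \in A). Qed.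

Lemma sum_uniq1 (T : finType) (P : pred T) :
  (forall x y, P x -> P y -> x = y) -> \sum_(x : T) (P x : nat) <= 1.
Proof.
move=> H; have -> : \sum_(x : T) (P x : nat) = #|[set x | P x]|.
  by rewrite card_sumE; apply: eq_bigr => x _; rewrite inE.
case: (pickP P) => [x0 Px0|P0].
  apply: (@leq_trans #|[set x0]|); last by rewrite cards1.
  apply: subset_leq_card; apply/subsetP => y; rewrite !inE => Py.
  by rewrite (H _ _ Py Px0).
suff -> : [set x | P x] = set0 by rewrite cards0.
by apply/setP => y; rewrite !inE P0.
Qed.

Lemma edge_cov e : e \in M -> (exists j, e \in Mj j) \/ e \in Pset.
Proof.
move=> eM; rewrite /Mj /Pset.
case: (eshape eM) => [[x [y [j' [E bx bY hu]]]] | [z E] | [i [z [E Hn]]] | [i E]]; subst e.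
- by left; exists j'; rewrite inE eM exists_in2 bx eqxx.
- by left; exists (val z).1; rewrite inE eM exists_in2 /= eqxx.
- by left; exists (val z).1; rewrite inE eM exists_in2 /= eqxx ?orbT.
- by right; rewrite inE eM exists_in2.
Qed.

Lemma cross_shape e : e \in M -> [exists v in e, isX v] -> exists z : iface C, e = [set VI z; VX (val z).2].
Proof.
move=> eM; case: (eshape eM) => [[x [y [j' [E bx bY hu]]]] | [z E] | [i [z [E Hn]]] | [i E]]; subst e;
  rewrite exists_in2 /=.
- by case/blkE: bx => -> _ _; case/blkE: bY => -> _ _.
- by exists z.
- by [].
- by [].
Qed.

Lemma P_shape e : e \in M -> [exists v in e, isP v] -> exists q, VPi q \in e.
Proof.
move=> eM; case: (eshape eM) => [[x [y [j' [E bx bY hu]]]] | [z E] | [i [z [E Hn]]] | [i E]]; subst e;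
  rewrite exists_in2 /=.
- by case/blkE: bx => _ _ ->; case/blkE: bY => _ _ ->.
- by [].
- by [].
- by exists i; rewrite !inE eqxx orbT.
Qed.

Lemma Cr_shape j e : e \in Cr j -> exists z : iface C, (val z).1 = j /\ e = [set VI z; VX (val z).2].
Proof.
rewrite inE => /andP[eM /andP[hx hi]].
case: (cross_shape eM hx) => z E; exists z; split => //.
by move: hi; rewrite E exists_in2 /= orbF => /eqP.
Qed.

Lemma Cr_uniq e j j' : e \in Cr j -> e \in Cr j' -> j = j'.
Proof.
case/Cr_shape => z [<- ->]; rewrite inE => /andP[_ /andP[_]].
by rewrite exists_in2 /= orbF => /eqP.
Qed.
End P.

Section F.
Variables (c t : nat) (S : 'I_t -> {set {set 'I_(3 * c)}}).
Local Notation C := (bigC S).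
Local Notation V := (vert t C).
Local Notation adj := (G_adj S).
Variable M : {set {set V}}.
Hypothesis Mmatch : is_matching adj M.
Hypothesis Mforest : induced_forest adj (cover M).
Local Notation cov := (cover M).
Hypothesis S3 : forall i, three_sets (S i).

Lemma s1 : #|M| <= \sum_(j : csub C) #|Mj M j| + #|Pset M|.
Proof.
have E : \sum_(j : csub C) #|Mj M j| = \sum_(j : csub C) \sum_(e : {set V}) (e \in Mj M j : nat).
  by apply: eq_bigr => j _; rewrite card_sumE.
rewrite E card_sumE [#|Pset M|]card_sumE.
rewrite exchange_big -big_split /=.
apply: leq_sum => e _.
case: (boolP (e \in M)) => // eM.
case: (edge_cov Mmatch eM) => [[j ej]|ep].
- rewrite (bigD1 j); last by [].
  have H : 1 <= (e \in Mj M j : nat) by rewrite ej.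
  apply: leq_trans H _; rewrite -addnA; exact: leq_addr.
- by rewrite ep addn1.
Qed.

Lemma Xcard : #|[set v : V | isX v]| = 3 * c.
Proof.
have -> : [set v : V | isX v] = [set VX a | a : 'I_(3 * c)].
  apply/setP => v; rewrite inE; case: v => [a|z|s|s|s|s||i] /=.
  - by apply/esym/imsetP; exists a.
  all: try by apply/esym; apply: negbTE; apply/negP => /imsetP[? _ E]; discriminate E.
by rewrite card_imset ?card_ord // => a b [].
Qed.

Lemma s2 : \sum_(j : csub C) #|Cr M j| <= #|[set v : V | isX v] :&: cov|.
Proof.
have FM : CrAll M \subset M by apply/subsetP => e; rewrite inE => /andP[].
apply: (@leq_trans #|CrAll M|).
  have E : \sum_(j : csub C) #|Cr M j| = \sum_(j : csub C) \sum_(e : {set V}) (e \in Cr M j : nat).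
    by apply: eq_bigr => j _; rewrite card_sumE.
  rewrite E [#|CrAll M|]card_sumE.
  rewrite exchange_big; apply: leq_sum => e _.
  case: (boolP (e \in CrAll M)) => h.
    by apply: (sum_uniq1 (P := fun j => e \in Cr M j)) => j j' h1 h2; exact: (Cr_uniq Mmatch h1 h2).
  rewrite big1 // => j _; case: (boolP (e \in Cr M j)) => // hc.
  by move: h; rewrite !inE; move: hc; rewrite inE => /andP[-> /andP[-> _]].
apply: leq_trans (card_meet Mmatch (A := [set v : V | isX v]) FM _) _.
  by move=> e; rewrite inE => /andP[_ /existsP[v /andP[h1 h2]]]; exists v; rewrite ?inE.
apply: subset_leq_card; apply: setIS; exact: cover_sub.
Qed.

Lemma s3 : #|Pset M| <= 1.
Proof.
have FM : Pset M \subset M by apply/subsetP => e; rewrite inE => /andP[].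
apply: leq_trans (card_meet Mmatch (A := [set VP]) FM _) _.
  move=> e; rewrite inE => /andP[_ /existsP[v /andP[h1 h2]]]; exists v; rewrite ?inE //.
  by case: v h1 h2.
apply: (@leq_trans #|[set (VP : V)]|); last by rewrite cards1.
by apply: subset_leq_card; apply: subsetIl.
Qed.

Lemma s4 : 3 * \sum_(j : csub C) #|Mj M j| + \sum_(j : csub C) ((0 < #|Cr M j|) && ~~((#|Cr M j| == 3) && ((VU j \in cov) || (VW j \in cov))))
  <= 6 * #|C| + 2 * \sum_(j : csub C) #|Cr M j|.
Proof.
have H : \sum_(j : csub C) (3 * #|Mj M j| + ((0 < #|Cr M j|) && ~~((#|Cr M j| == 3) && ((VU j \in cov) || (VW j \in cov)))))
   <= \sum_(j : csub C) (6 + 2 * #|Cr M j|).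
  by apply: leq_sum => j _; exact: gadget Mmatch Mforest S3 j.
set b := fun j : csub C => ((0 < #|Cr M j|) && ~~((#|Cr M j| == 3) && ((VU j \in cov) || (VW j \in cov))) : nat).
have e1 : \sum_(j : csub C) (3 * #|Mj M j| + b j) = 3 * \sum_(j : csub C) #|Mj M j| + \sum_(j : csub C) b j.
  by rewrite big_split big_distrr.
have e2 : \sum_(j : csub C) (6 + 2 * #|Cr M j|) = 6 * #|C| + 2 * \sum_(j : csub C) #|Cr M j|.
  by rewrite big_split big_distrr sum_nat_const card_sig mulnC.
by rewrite -e1 -e2.
Qed.

Lemma I3 (j : csub C) : #|[set v : V | isI j v]| <= 3.
Proof.
suff : #|[set v : V | isI j v]| <= #|val j| by rewrite (card_val S3).
have sub : [set v : V | isI j v] \subset [set VI z | z in [set z : iface C | (val z).1 == j]].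
  apply/subsetP => v; rewrite !inE; case: v => // z zj.
  by apply/imsetP; exists z; rewrite ?inE.
apply: leq_trans (subset_leq_card sub) _.
rewrite card_imset; last by move=> a b [].
rewrite -(card_in_imset (f := fun z : iface C => (val z).2)).
  apply: subset_leq_card; apply/subsetP => d /imsetP[z]; rewrite inE => /eqP zj ->.
  by rewrite -zj; exact: (valP z).
move=> z1 z2; rewrite !inE => /eqP e1 /eqP e2 E; apply: val_inj.
by rewrite [val z1]surjective_pairing [val z2]surjective_pairing e1 e2 E.
Qed.

Lemma full_cross (j : csub C) : #|Cr M j| = 3 -> forall d (H : d \in val j),
  [set VI (exist _ (j, d) H : iface C); VX d] \in M.
Proof.
move=> h3 d H.
set A := [set v : V | isI j v].
have FM : Cr M j \subset M by apply/subsetP => e; rewrite inE => /andP[].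
have h1 := card_meet Mmatch (A := A) FM.
have h2 : #|Cr M j| <= #|A :&: cover (Cr M j)|.
  apply: h1 => e; rewrite inE => /andP[_ /andP[_ /existsP[v /andP[v1 v2]]]].
  by exists v; rewrite ?inE.
rewrite h3 in h2.
have hA : A :&: cover (Cr M j) = A.
  apply/eqP; rewrite eqEcard subsetIl /=; exact: leq_trans (I3 j) h2.
have : VI (exist _ (j, d) H : iface C) \in A :&: cover (Cr M j) by rewrite hA inE /= eqxx.
rewrite inE => /andP[_ /bigcupP[e eC ve]].
have eM : e \in M by exact: (subsetP FM).
case: (Cr_shape Mmatch eC) => z [zj E].
move: ve; rewrite E !inE => /orP[] /eqP // [Ez].
by rewrite -Ez in E; rewrite -E.
Qed.

Lemma main : 2 * #|C| + 2 * c + 1 <= #|M| -> exists q, x3c_yes (S q).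
Proof.
move=> hl.
have h1 := s1; have h2 := s2; have h3 := s3; have h4 := s4.
have hX : #|[set v : V | isX v] :&: cov| <= 3 * c.
  by apply: leq_trans (subset_leq_card (subsetIl _ _)) _; rewrite Xcard.
set b := fun j : csub C => ((0 < #|Cr M j|) && ~~((#|Cr M j| == 3) && ((VU j \in cov) || (VW j \in cov))) : nat).
have [hb [hp hc]] : \sum_(j : csub C) b j = 0 /\ #|Pset M| = 1 /\ #|[set v : V | isX v] :&: cov| = 3 * c.
  rewrite /b; lia.
have [q hq] : exists q, VPi q \in cov.
  have : 0 < #|Pset M| by rewrite hp.
  case/card_gt0P => e; rewrite inE => /andP[eM ep].
  case: (P_shape Mmatch eM ep) => q hq; exists q; exact: mem_cov eM hq.
have hXa : forall a : 'I_(3 * c), (VX a : V) \in cov.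
  have E : [set v : V | isX v] :&: cov = [set v : V | isX v].
    apply/eqP; rewrite eqEcard subsetIl /= hc Xcard //.
  move=> a; have : (VX a : V) \in [set v : V | isX v] :&: cov by rewrite E inE.
  by rewrite inE => /andP[].
have hbj : forall j : csub C, 0 < #|Cr M j| -> #|Cr M j| = 3 /\ ((VU j \in cov) || (VW j \in cov)).
  move=> j hj; move/eqP: hb; rewrite sum_nat_eq0 => /forallP /(_ j) /=.
  rewrite /b hj /= eqb0 negbK => /andP[/eqP -> ->]; by [].
exists q; exists [set val j | j in [set j : csub C | #|Cr M j| == 3]]; split.
  apply/subsetP => s /imsetP[j]; rewrite inE => /eqP cr3 ->.
  have [_ uw] := hbj j ltac:(by rewrite cr3).
  apply/negPn/negP => nq; apply: (C2 Mforest hq nq uw).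
  apply: leq_trans (CrPe_I Mmatch j).
  apply: leq_trans (subset_leq_card (subsetUl (Cr M j) (Pe M j))).
  by rewrite cr3.
move=> a.
have [e eM ea] := covP (hXa a).
have [z E] : exists z : iface C, e = [set VI z; VX (val z).2].
  by apply: (cross_shape Mmatch eM); apply/existsP; exists (VX a); rewrite ea.
have az : a = (val z).2.
  by move: ea; rewrite E !inE => /orP[] /eqP // [].
set j0 := (val z).1.
have ej0 : e \in Cr M j0.
  by rewrite inE eM E !exists_in2 /= eqxx.
have [cr0 _] := hbj j0 ltac:(by apply/card_gt0P; exists e).
suff -> : [set s in [set val j | j in [set j : csub C | #|Cr M j| == 3]] | a \in s] = [set val j0].
  by rewrite cards1.
apply/setP => s; rewrite !inE; apply/andP/eqP.
- case=> /imsetP[j]; rewrite inE => /eqP crj -> ha.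
  have eM' := full_cross crj ha.
  have ee : e = [set VI (exist _ (j, a) ha : iface C); VX a].
    apply: (mdisj Mmatch eM eM' ea); by rewrite !inE eqxx orbT.
  have : VI (exist _ (j, a) ha : iface C) \in e by rewrite ee !inE eqxx.
  rewrite E !inE => /orP[] /eqP // [Ez].
  by rewrite /j0 -Ez.
- move=> ->; split.
    by apply/imsetP; exists j0; rewrite // inE cr0.
  by rewrite az; exact: (valP z).
Qed.

End F.

Theorem lemma16 (c t : nat) (S : 'I_t -> {set {set 'I_(3 * c)}}) :
  (forall i, three_sets (S i)) ->
  (forall i j, #|S i| = #|S j|) ->
  injective S ->
  (exists M : {set {set vert t (bigC S)}},
      acyclic_matching (G_adj S) M /\ ell S <= #|M|) ->
  exists q : 'I_t, x3c_yes (S q).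
Proof.
move=> H3 _ _ [M [[mm mf] hl]].
exact: (main mm mf H3 hl).
Qed.
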